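(* Let $k,l\ge1$, $1\le r\le 2k(2l+1)$, $\mathcal{B}=\mathcal{B}(2k,2l+1;r)$ and $G=\langle H,V\rangle$. Then \[|\mathcal{O}_G(\mathcal{B})|=\frac14\left(\binom{2k(2l+1)}{r}+2\binom{k(2l+1)}{\frac r2}+\sum_{t=0}^{r}\binom{2k}{t}\binom{2kl}{\frac{r-t}{2}}\right).\]
   Context: $\mathcal{B}(2k,2l+1;r)$ is the set of all subsets of exactly $r$ cells (boards with $r$ blocked cells) of a grid with $2k$ rows and $2l+1$ columns. $\langle H,V\rangle=\{R_0,H,V,R_{180}\}$ is the group generated by the reflections $H$, $V$ across the horizontal and vertical midlines (with $R_{180}$ the 180-degree rotation), acting on boards; $\mathcal{O}_G(\mathcal{B})$ is the set of orbits. Convention: $\binom{a}{b}=0$ when $b$ is not a nonnegative integer or $b>a$. *)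

(* Defs.v *)
From mathcomp Require Import all_boot.
Set Implicit Arguments. Unset Strict Implicit. Unset Printing Implicit Defensive.

(* Grid with m rows and n columns: cells are pairs (row, column). *)
Definition cell (m n : nat) := ('I_m * 'I_n)%type.

Definition reflH m n (c : cell m n) : cell m n := (rev_ord c.1, c.2).
Definition reflV m n (c : cell m n) : cell m n := (c.1, rev_ord c.2).

(* The group <H,V> = {R0, H, V, R180}, indexed by (b1,b2) : bool*bool,
   acting on cells: (b1,b2) applies H if b1 and V if b2
   ((false,false)=R0, (true,false)=H, (false,true)=V, (true,true)=R180). *)
Definition HVact m n (g : bool * bool) (c : cell m n) : cell m n :=
  let c1 := if g.1 then reflH c else c in
  if g.2 then reflV c1 else c1.

(* Action on boards (sets of blocked cells). *)
Definition board_act m n (g : bool * bool) (B : {set cell m n}) : {set cell m n} :=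
  [set HVact g c | c in B].

Definition boards m n r : {set {set cell m n}} := [set B : {set cell m n} | #|B| == r].

Definition HVorbit m n (B : {set cell m n}) : {set {set cell m n}} :=
  [set board_act g B | g : bool * bool].

Definition HVorbits m n r : {set {set {set cell m n}}} :=
  [set HVorbit B | B in boards m n r].

(* binom(a, x/2) with the convention that it is 0 when x/2 is not an integer. *)
Definition binom_half (a x : nat) : nat := if odd x then 0 else 'C(a, x./2).

(* Main.v *)
From HB Require Import structures.
Require Import Defs.
From mathcomp Require Import all_boot all_algebra all_fingroup zify ring.
Set Implicit Arguments. Unset Strict Implicit. Unset Printing Implicit Defensive.

Definition K4 := (bool * bool)%type.
HB.instance Definition _ := Finite.on K4.
Definition k4mul (x y : K4) : K4 := (x.1 (+) y.1, x.2 (+) y.2).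
Definition k4one : K4 := (false, false).
Lemma k4mulA : associative k4mul.
Proof. by case=> [[] []] [[] []] [[] []]. Qed.
Lemma k4mul1 : left_id k4one k4mul.
Proof. by case=> [[] []]. Qed.
Lemma k4mulV : left_inverse k4one id k4mul.
Proof. by case=> [[] []]. Qed.
HB.instance Definition _ := Finite_isGroup.Build K4 k4mulA k4mul1 k4mulV.

Section Act.
Variables m n : nat.
Definition toK (c : cell m n) (g : K4) : cell m n := HVact g c.
Lemma toK1 : toK^~ 1%g =1 id.
Proof. by case. Qed.
Lemma toKM x : act_morph toK x.
Proof.
case: x => i j [[] []] [[] []] /=; rewrite /toK /HVact /reflH /reflV /= ?rev_ordK //.
Qed.
Definition actK := TotalAction toK1 toKM.

Lemma burnside r :
  (#|HVorbits m n r| * 4 =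
   \sum_(g : bool * bool) #|[set S in boards m n r | board_act g S == S]|)%N.
Proof.
have acts : [acts [set: K4], on boards m n r | actK^*].
  apply/subsetP=> g _; rewrite !inE /=; apply/subsetP=> S.
  rewrite !inE /= card_imset //; exact: act_inj.
have -> : HVorbits m n r = orbit actK^* [set: K4] @: boards m n r.
  apply: eq_imset => S; apply/setP=> T; apply/imsetP/imsetP=> [[g _ ->]|[g _ ->]];
  by exists g.
have := Frobenius_Cauchy acts.
rewrite cardsT card_prod !card_bool /= -[(2 * 2)%N]/4 => <-.
rewrite (eq_bigl predT) => [|g]; last by rewrite inE.
apply: eq_bigr => g _; apply: eq_card => S; rewrite !inE.
congr (_ && _); by rewrite sub1set inE.
Qed.
End Act.
Lemma ext_sum (h : nat -> nat) a b : a <= b -> (forall t, a <= t < b -> h t = 0) ->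
  \sum_(0 <= t < a) h t = \sum_(0 <= t < b) h t.
Proof.
move=> ab h0; rewrite (big_cat_nat (leq0n a) ab) /= [X in _ = _ + X]big_nat_cond [X in _ = _ + X]big1 ?addn0 //.
by move=> t /andP[/andP[ht1 ht2] _]; apply: h0; rewrite ht1.
Qed.

Section Inv.
Variables (T : finType) (f : T -> T) (F P : {set T}).
Hypotheses (fK : involutive f) (fF : {in F, forall x, f x = x})
  (fP : {in P, forall x, f x \notin P})
  (cov : forall x, x \notin F -> (x \in P) || (f x \in P))
  (dPF : [disjoint P & F]).

Let finj : injective f := inv_inj fK.

Lemma PnF x : x \in P -> x \notin F.
Proof. by move=> xP; rewrite (disjointFr dPF xP). Qed.

Lemma fPnF x : x \in P -> f x \notin F.
Proof. move=> xP; apply/negP => fxF; have e := fF fxF; rewrite fK in e.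
by move: (PnF xP); rewrite e fxF. Qed.

Definition phi (p : {set T} * {set T}) := p.1 :|: p.2 :|: f @: p.2.

Lemma inv_eq (S : {set T}) : (f @: S == S) = [forall x in S, f x \in S].
Proof.
apply/eqP/forall_inP => [e x xS|h]; first by rewrite -e imset_f.
apply/setP => x; apply/imsetP/idP => [[y yS ->]|xS]; first exact: h.
by exists (f x); rewrite ?fK // h.
Qed.

Lemma phi_card (A C : {set T}) : A \subset F -> C \subset P -> #|phi (A, C)| = #|A| + 2 * #|C|.
Proof.
move=> AF CP; rewrite /phi /=.
rewrite cardsU (_ : (A :|: C) :&: f @: C = set0); last first.
  apply/setP => x; rewrite !inE; apply/negP => /andP[/orP[xA|xC] /imsetP[y yC ex]];
    subst x.
    by move: (fPnF (subsetP CP y yC)); rewrite (subsetP AF _ xA).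
  by move: (fP (subsetP CP y yC)); rewrite (subsetP CP _ xC).
rewrite cardsU (_ : A :&: C = set0); last first.
  apply/setP => x; rewrite !inE; apply/negP => /andP[xA xC].
  by move: (PnF (subsetP CP x xC)); rewrite (subsetP AF _ xA).
by rewrite card_imset // cards0 !subn0; lia.
Qed.

Variable r : nat.
Definition Dset := [set p : {set T} * {set T} |
   (p.1 \subset F) && ((p.2 \subset P) && (#|p.1| + 2 * #|p.2| == r))].

Lemma fix_imset : [set S : {set T} | (#|S| == r) && (f @: S == S)] = phi @: Dset.
Proof.
apply/setP => S; rewrite inE inv_eq; apply/andP/imsetP.
  move=> [/eqP Sr /forall_inP Sinv].
  have AF : S :&: F \subset F by apply: subsetIr.
  have CP : S :&: P \subset P by apply: subsetIr.
  have eS : S = phi (S :&: F, S :&: P).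
    apply/setP => x; rewrite /phi /= !inE; apply/idP/idP.
      move=> xS; rewrite xS /=; case xF: (x \in F) => //=.
      move: (cov (negbT xF)); case: (x \in P) => //= fxP.
      by apply/imsetP; exists (f x); rewrite ?fK // !inE fxP Sinv.
    case/orP => [/orP[] /andP[] //|/imsetP[y]]; rewrite inE => /andP[yS _] ->.
    exact: Sinv.
  exists (S :&: F, S :&: P) => //; rewrite inE /= AF CP /=.
  by rewrite -phi_card // -eS Sr.
move=> [[A C]]; rewrite inE /= => /andP[AF /andP[CP /eqP cr]] ->.
rewrite phi_card // cr eqxx /=; split => //; apply/forall_inP => x; rewrite /phi /= !inE.
case/orP => [/orP[xA|xC]|/imsetP[y yC ->]].
- by rewrite fF ?xA // (subsetP AF).
- by rewrite imset_f ?orbT.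
- by rewrite fK yC orbT.
Qed.

Lemma phi_inj : {in Dset &, injective phi}.
Proof.
move=> [A C] [A' C']; rewrite !inE /= => /andP[AF /andP[CP _]] /andP[AF' /andP[CP' _]] e.
have hF (A0 C0 : {set T}) : A0 \subset F -> C0 \subset P -> phi (A0, C0) :&: F = A0.
  move=> A0F C0P; apply/setP => x; rewrite /phi /= !inE.
  case xA: (x \in A0); first by rewrite (subsetP A0F).
  case xC: (x \in C0) => /=; first by rewrite (negbTE (PnF (subsetP C0P _ xC))).
  apply/negP => /andP[/imsetP[y yC ->]]; by rewrite (negbTE (fPnF (subsetP C0P _ yC))).
have hP (A0 C0 : {set T}) : A0 \subset F -> C0 \subset P -> phi (A0, C0) :&: P = C0.
  move=> A0F C0P; apply/setP => x; rewrite /phi /= !inE.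
  case xC: (x \in C0) => /=; first by rewrite orbT (subsetP C0P).
  rewrite orbF; case xA: (x \in A0) => /=.
    by apply/negP => xP; move: (PnF xP); rewrite (subsetP A0F).
  apply/negP => /andP[/imsetP[y yC ->]]; by rewrite (negbTE (fP (subsetP C0P _ yC))).
by move: (hF A C AF CP) (hP A C AF CP); rewrite e hF // hP // => -> ->.
Qed.

Definition gfun t := if t <= r then binom_half #|P| (r - t) else 0.

Lemma inner_card t : #|[set C : {set T} | (C \subset P) && (t + 2 * #|C| == r)]| = gfun t.
Proof.
rewrite /gfun /binom_half; case: leqP => tr; last first.
  apply: eq_card0 => C; rewrite inE; apply/negP => /andP[_ /eqP]; lia.
have h := odd_double_half (r - t); rewrite -muln2 in h.
case o: (odd (r - t)).
  apply: eq_card0 => C; rewrite inE; apply/negP => /andP[_ /eqP]; rewrite o /= in h; lia.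
rewrite -cards_draws; apply: eq_card => C; rewrite !inE; congr (_ && _).
rewrite o /= in h; apply/eqP/eqP; lia.
Qed.

Lemma card_D : #|Dset| = \sum_(A : {set T} | A \subset F) gfun #|A|.
Proof.
rewrite -sum1_card.
rewrite (eq_bigl (fun p : {set T} * {set T} => (p.1 \subset F) &&
   ((p.2 \subset P) && (#|p.1| + 2 * #|p.2| == r)))); last by move=> p; rewrite inE.
rewrite -(pair_big_dep (fun A : {set T} => A \subset F)
   (fun A C : {set T} => (C \subset P) && (#|A| + 2 * #|C| == r)) (fun _ _ => 1)) /=.
apply: eq_bigr => A _; rewrite sum1_card -inner_card; apply: eq_card => C; by rewrite inE.
Qed.

Lemma sum_by_card (g : nat -> nat) :
  \sum_(A : {set T} | A \subset F) g #|A| = \sum_(t < #|F|.+1) 'C(#|F|, t) * g t.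
Proof.
rewrite (partition_big (fun A : {set T} => (inord #|A| : 'I_#|F|.+1)) predT) //=.
apply: eq_bigr => t _.
rewrite (eq_bigl (fun A : {set T} => (A \subset F) && (#|A| == t))); last first.
  move=> A; case AF: (A \subset F) => //=.
  have := subset_leq_card AF => le; rewrite -val_eqE /= inordK //.
rewrite (eq_bigr (fun _ => g t)); last by move=> A /andP[_ /eqP ->].
rewrite sum_nat_const -cards_draws; congr (_ * _).
by apply: eq_card => A /=; rewrite inE.
Qed.

Lemma count_fix :
  #|[set S : {set T} | (#|S| == r) && (f @: S == S)]| =
  \sum_(0 <= t < r.+1) 'C(#|F|, t) * binom_half #|P| (r - t).
Proof.
rewrite fix_imset card_in_imset; last exact: phi_inj.
rewrite card_D sum_by_card -(big_mkord xpredT (fun t => 'C(#|F|, t) * gfun t)).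
rewrite (@ext_sum _ _ (#|F| + r.+1)); last 2 first.
- lia.
- by move=> t /andP[ht _]; rewrite bin_small.
rewrite [RHS](eq_big_nat _ _ (F2 := fun t => 'C(#|F|, t) * gfun t)); last first.
  by move=> t /andP[_ ht]; rewrite /gfun -ltnS ht.
apply/esym/ext_sum; first lia.
by move=> t /andP[ht _]; rewrite /gfun leqNgt ht muln0.
Qed.
End Inv.
Lemma card_lt (m k : nat) : k <= m -> #|[set i : 'I_m | i < k]| = k.
Proof.
move=> km; have -> : [set i : 'I_m | i < k] = [set widen_ord km j | j in 'I_k].
  apply/setP => i; rewrite inE; apply/idP/imsetP => [ik|[j _ ->]] /=; last exact: ltn_ord.
  by exists (Ordinal ik) => //; apply: val_inj.
by rewrite card_imset ?card_ord // => a b /(congr1 val) /= /val_inj.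
Qed.

Lemma fix_conv m n r (g : bool * bool) :
  #|[set S in boards m n r | board_act g S == S]| =
  #|[set S : {set cell m n} | (#|S| == r) && ((HVact g) @: S == S)]|.
Proof. by apply: eq_card => S; rewrite !inE. Qed.

Lemma sum_F0 p r : \sum_(0 <= t < r.+1) 'C(0, t) * binom_half p (r - t)
  = binom_half p r.
Proof.
rewrite big_ltn // bin0 mul1n subn0 big_nat_cond big1 ?addn0 //.
by move=> [|t] /andP[/andP[]] //.
Qed.

Lemma cardP1 m n k : k <= m -> #|[set c : cell m n | c.1 < k]| = k * n.
Proof.
move=> km; have -> : [set c : cell m n | c.1 < k] = setX [set i : 'I_m | i < k] [set: 'I_n].
  by apply/setP => -[i j]; rewrite !inE andbT.
by rewrite cardsX card_lt // cardsT card_ord.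
Qed.

Lemma cardP2 m n l : l <= n -> #|[set c : cell m n | c.2 < l]| = m * l.
Proof.
move=> ln; have -> : [set c : cell m n | c.2 < l] = setX [set: 'I_m] [set j : 'I_n | j < l].
  by apply/setP => -[i j]; rewrite !inE.
by rewrite cardsX card_lt // cardsT card_ord.
Qed.

Lemma cardF2 m l : #|[set c : cell m (2 * l + 1) | c.2 == l :> nat]| = m.
Proof.
have ln : l < 2 * l + 1 by lia.
have -> : [set c : cell m (2 * l + 1) | c.2 == l :> nat] = setX [set: 'I_m] [set Ordinal ln].
  by apply/setP => -[i j]; rewrite !inE -val_eqE.
by rewrite cardsX cards1 cardsT card_ord muln1.
Qed.

Lemma fixH k l r :
  #|[set S : {set cell (2 * k) (2 * l + 1)} | (#|S| == r) && (HVact (true, false) @: S == S)]|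
  = binom_half (k * (2 * l + 1)) r.
Proof.
rewrite (@count_fix _ _ set0 [set c : cell (2 * k) (2 * l + 1) | c.1 < k]).
- by rewrite cards0 sum_F0 cardP1 //; lia.
- by move=> [i j]; rewrite /HVact /reflH /= rev_ordK.
- by move=> x; rewrite inE.
- move=> [i j]; have := ltn_ord i; have := ltn_ord j; rewrite !inE /= => *; lia.
- move=> [i j] _; have := ltn_ord i; have := ltn_ord j; rewrite !inE /= => *; lia.
- by rewrite disjoints_subset setC0 subsetT.
Qed.

Lemma fixR k l r :
  #|[set S : {set cell (2 * k) (2 * l + 1)} | (#|S| == r) && (HVact (true, true) @: S == S)]|
  = binom_half (k * (2 * l + 1)) r.
Proof.
rewrite (@count_fix _ _ set0 [set c : cell (2 * k) (2 * l + 1) | c.1 < k]).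
- by rewrite cards0 sum_F0 cardP1 //; lia.
- by move=> [i j]; rewrite /HVact /reflH /reflV /= !rev_ordK.
- by move=> x; rewrite inE.
- move=> [i j]; have := ltn_ord i; have := ltn_ord j; rewrite !inE /= => *; lia.
- move=> [i j] _; have := ltn_ord i; have := ltn_ord j; rewrite !inE /= => *; lia.
- by rewrite disjoints_subset setC0 subsetT.
Qed.

Lemma fixV k l r :
  #|[set S : {set cell (2 * k) (2 * l + 1)} | (#|S| == r) && (HVact (false, true) @: S == S)]|
  = \sum_(0 <= t < r.+1) 'C(2 * k, t) * binom_half (2 * k * l) (r - t).
Proof.
rewrite (@count_fix _ _ [set c : cell (2 * k) (2 * l + 1) | c.2 == l :> nat]
   [set c : cell (2 * k) (2 * l + 1) | c.2 < l]).
- by rewrite cardF2 cardP2 //; lia.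
- by move=> [i j]; rewrite /HVact /reflV /= rev_ordK.
- move=> [i j]; rewrite inE /= => /eqP h; rewrite /HVact /reflV /=; congr (_, _).
  apply: val_inj => /=; lia.
- move=> [i j]; have := ltn_ord i; have := ltn_ord j; rewrite !inE /= => *; lia.
- move=> [i j]; have := ltn_ord i; have := ltn_ord j; rewrite !inE /= => *; lia.
- apply/pred0P => -[i j]; rewrite !inE /=; apply/negP => /andP[]; lia.
Qed.

Lemma fixI m n r :
  #|[set S : {set cell m n} | (#|S| == r) && (HVact (false, false) @: S == S)]|
  = 'C(m * n, r).
Proof.
rewrite -[m in RHS]card_ord -[n in RHS]card_ord -card_prod -card_draws.
apply: eq_card => S; rewrite !inE; case: (#|S| == r) => //=.
by apply/eqP/setP => c; apply/imsetP/idP => [[d dS ->]|cS]; [|exists c].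
Qed.

Import GRing.Theory.
Local Open Scope ring_scope.

Theorem proposition5p5 (k l r : nat) :
  (1 <= k)%N -> (1 <= l)%N -> (1 <= r <= (2 * k) * (2 * l + 1))%N ->
  (#|HVorbits (2 * k) (2 * l + 1) r|%:R : rat) =
  4%:R^-1 * ( ('C((2 * k) * (2 * l + 1), r))%:R
            + 2%:R * (binom_half (k * (2 * l + 1)) r)%:R
            + (\sum_(0 <= t < r.+1) 'C(2 * k, t) * binom_half (2 * k * l) (r - t))%N%:R ).
Proof.
move=> _ _ _.
have e := burnside (2 * k) (2 * l + 1) r.
set G := fun g : bool * bool => #|[set S in boards (2 * k) (2 * l + 1) r | board_act g S == S]|.
have eG : (\sum_(g : bool * bool) G g = \sum_(a : bool) \sum_(b : bool) G (a, b))%N.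
  by rewrite pair_bigA; apply: eq_bigr => -[a b].
rewrite -/G eG !big_bool /= /G !fix_conv fixI fixH fixV fixR in e.
have -> : (#|HVorbits (2 * k) (2 * l + 1) r|%:R : rat)
          = (#|HVorbits (2 * k) (2 * l + 1) r| * 4)%N%:R / 4%:R.
  by rewrite natrM mulfK.
rewrite e !natrD; ring.
Qed.
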